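(* Let $M$ be a compact metric space and $f:M\to M$ a continuous map such that $[a_{f,\mathcal{U}}(n)]\in\mathbb{L}$ for every finite open covering $\mathcal{U}$ of $M$. Then $o(f)\in\overline{\mathbb{L}}$ and the topological entropy satisfies $h(f)=0$.
   Context: Let $\mathcal{O}$ be the set of non-decreasing sequences $a:\mathbb{N}\to[0,\infty)$, $a\approx b$ iff $c_1a(n)\le b(n)\le c_2a(n)$ for all $n$ for some constants $0<c_1\le c_2$, $\mathbb{O}=\mathcal{O}/\!\approx$ with classes $[a(n)]$, ordered by $[a(n)]\le[b(n)]$ iff $a(n)\le Cb(n)$ for all $n$ for some $C>0$; $\overline{\mathbb{O}}$ is its Dedekind–MacNeille completion. $\mathbb{L}$ is the set of classes $[a(n)]$ with $[a(mn)]=[a(n)]$ for some integer $m\ge2$, and $\overline{\mathbb{L}}=\{\sup(\Gamma)\in\overline{\mathbb{O}}:\Gamma\subset\mathbb{L}\text{ countable}\}$. For a finite open covering $\mathcal{U}=\{U_1,\dots,U_k\}$ of $M$, $\mathcal{U}^n=\{U_{i_0}\cap f^{-1}(U_{i_1})\cap\cdots\cap f^{-n}(U_{i_n})\neq\emptyset\}$ and $a_{f,\mathcal{U}}(n)$ is the minimal cardinality of a subcovering of $\mathcal{U}^n$. The generalized entropy is $o(f)=\sup\{[a_{f,\mathcal{U}}(n)]:\mathcal{U}\text{ finite open covering}\}\in\overline{\mathbb{O}}$ (equivalently the supremum over $\varepsilon>0$ of the classes of the minimal cardinalities of $(n,\varepsilon)$-generators). $h(f)$ denotes the classical topological entropy.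 *)

(* Defs.v *)
From HB Require Import structures.
From mathcomp Require Import all_boot all_order all_algebra.
From mathcomp Require Import all_classical all_reals all_analysis.
Set Implicit Arguments. Unset Strict Implicit. Unset Printing Implicit Defensive.
Import Order.TTheory GRing.Theory Num.Theory.
Local Open Scope classical_set_scope.
Local Open Scope ring_scope.

Section Orders.
Variable R : realType.

Definition inO (a : nat -> R) : Prop :=
  (forall n, 0 <= a n) /\ (forall n m, (n <= m)%N -> a n <= a m).

Definition approx (a b : nat -> R) : Prop :=
  exists c1 c2 : R, 0 < c1 /\ c1 <= c2 /\
    forall n, c1 * a n <= b n /\ b n <= c2 * a n.

Definition cls_le (a b : nat -> R) : Prop :=
  exists C : R, 0 < C /\ forall n, a n <= C * b n.

Definition inL (a : nat -> R) : Prop :=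
  inO a /\ exists m : nat, (2 <= m)%N /\ approx a (fun n => a (m * n)%N).

Definition upper_bound (S : (nat -> R) -> Prop) (c : nat -> R) : Prop :=
  inO c /\ forall a, S a -> cls_le a c.

(* In the Dedekind–MacNeille completion, sup(S) = sup(T) iff S and T have the
   same upper bounds in 𝕆 (the completion element sup(S) is the cut S^{ul}). *)
Definition same_sup (S T : (nat -> R) -> Prop) : Prop :=
  forall c, upper_bound S c <-> upper_bound T c.

(* sup(S) ∈ 𝕃bar : sup(S) = sup(Γ) for a countable Γ ⊂ 𝕃.  A countable Γ
   relevant here is nonempty, so it is the range of a sequence b. *)
Definition sup_in_Lbar (S : (nat -> R) -> Prop) : Prop :=
  exists b : nat -> (nat -> R), (forall k, inL (b k)) /\
    same_sup S (fun a => exists k, a = b k).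

End Orders.

Section Entropy.
Variable T : topologicalType.

Definition fin_open_cover (k : nat) (U : 'I_k -> set T) : Prop :=
  (forall i, open (U i)) /\ (forall x : T, exists i, U i x).

(* the element U_{w 0} ∩ f^{-1}(U_{w 1}) ∩ ... ∩ f^{-n}(U_{w n}) of U^n *)
Definition refined (f : T -> T) (k n : nat) (U : 'I_k -> set T)
    (w : {ffun 'I_n.+1 -> 'I_k}) : set T :=
  [set x | forall j : 'I_n.+1, U (w j) (iter j f x)].

Definition covers (f : T -> T) (k n : nat) (U : 'I_k -> set T)
    (W : {set {ffun 'I_n.+1 -> 'I_k}}) : Prop :=
  forall x : T, exists2 w, w \in W & refined f U w x.

Definition acount (f : T -> T) (k : nat) (U : 'I_k -> set T) (n : nat) : nat :=
  \big[minn/#|[set: {ffun 'I_n.+1 -> 'I_k}]|]_(W : {set {ffun 'I_n.+1 -> 'I_k}}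
        | `[< covers f U W >]) #|W|.

Definition aseq (R : realType) (f : T -> T) (k : nat) (U : 'I_k -> set T) :
  nat -> R := fun n => (acount f U n)%:R.

Definition cover_seqs (R : realType) (f : T -> T) : (nat -> R) -> Prop :=
  fun a => exists k (U : 'I_k -> set T), fin_open_cover U /\ a = @aseq R f k U.

Definition o_in_Lbar (R : realType) (f : T -> T) : Prop :=
  sup_in_Lbar (@cover_seqs R f).

(* classical topological entropy (Adler–Konheim–McAndrew):
   h(f) = sup_U lim_n (1/n) log N(U^n); the limit exists, so we write limsup. *)
Definition htop (R : realType) (f : T -> T) : \bar R :=
  ereal_sup [set e | exists k (U : 'I_k -> set T), fin_open_cover U /\
     e = limn_esup (fun n => ((ln (@aseq R f k U n)) / n%:R)%:E)].

End Entropy.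

(* Main.v *)
Require Import Defs.
From HB Require Import structures.
From mathcomp Require Import all_boot all_order all_algebra.
From mathcomp Require Import all_classical all_reals all_analysis.
Import Order.TTheory GRing.Theory Num.Theory.
Local Open Scope classical_set_scope.
Local Open Scope ring_scope.
Set Implicit Arguments. Unset Strict Implicit. Unset Printing Implicit Defensive.
From mathcomp Require Import finmap lra zify.
Import numFieldNormedType.Exports.

Lemma bigminn_le_seq (I : eqType) (s : seq I) (P : pred I) (F : I -> nat) x0 j :
  j \in s -> P j -> (\big[minn/x0]_(i <- s | P i) F i <= F j)%N.
Proof.
elim: s => // a s IH; rewrite inE big_cons => /orP[/eqP <-|js] Pj.
  by rewrite Pj geq_minl.
case: (P a); last exact: IH.
by rewrite (leq_trans (geq_minr _ _)) // IH.
Qed.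

Lemma bigminn_attained (I : finType) (P : pred I) (F : I -> nat) x0 :
  let b := \big[minn/x0]_(i | P i) F i in b = x0 \/ exists2 i, P i & b = F i.
Proof.
apply: (big_ind (fun y => y = x0 \/ exists2 i, P i & y = F i)); first by left.
  by move=> x y Hx Hy; rewrite /minn; case: ifP.
by move=> i Pi; right; exists i.
Qed.

Section Comb.
Variable T : topologicalType.
Variable f : T -> T.

Lemma acount_le k (U : 'I_k -> set T) n (W : {set {ffun 'I_n.+1 -> 'I_k}}) :
  covers f U W -> (acount f U n <= #|W|)%N.
Proof.
move=> cW; rewrite /acount; apply: bigminn_le_seq; first exact: mem_index_enum.
by apply/asboolP.
Qed.

Lemma covers_full k (U : 'I_k -> set T) n :
  (forall x, exists i, U i x) -> covers f U (finset.setT : {set {ffun 'I_n.+1 -> 'I_k}}).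
Proof.
move=> hU x.
have [g hg] := choice (fun (j : 'I_n.+1) => hU (iter j f x)).
by exists (finfun g); rewrite ?inE // /refined => j; rewrite ffunE.
Qed.

Lemma acount_attained k (U : 'I_k -> set T) n :
  (forall x, exists i, U i x) ->
  exists2 W : {set {ffun 'I_n.+1 -> 'I_k}}, covers f U W & #|W| = acount f U n.
Proof.
move=> hU; case: (bigminn_attained (fun W : {set {ffun 'I_n.+1 -> 'I_k}} =>
   `[< @covers _ f k n U W >]) (fun W => #|W|) #|[set: {ffun 'I_n.+1 -> 'I_k}]|).
  move=> e; exists (finset.setT : {set {ffun 'I_n.+1 -> 'I_k}}).
    exact: covers_full.
  rewrite /acount e; apply: eq_card => x; rewrite !inE; apply/esym/asboolP.
  done.
by case=> W /asboolP cW e; exists W => //; rewrite /acount e.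
Qed.

Lemma acount_refine k k' (U : 'I_k -> set T) (V : 'I_k' -> set T) (g : 'I_k' -> 'I_k) n :
  (forall x, exists i, V i x) -> (forall l, V l `<=` U (g l)) ->
  (acount f U n <= acount f V n)%N.
Proof.
move=> hV sVU; have [W cW <-] := acount_attained n hV.
pose W' := (fun w : {ffun 'I_n.+1 -> 'I_k'} => [ffun j => g (w j)] : {ffun 'I_n.+1 -> 'I_k}) @: W.
apply: (leq_trans (acount_le (W := W') _)); last exact: leq_imset_card.
move=> x; have [w wW rw] := cW x; exists [ffun j => g (w j)].
  by apply/imsetP; exists w.
by move=> j; rewrite ffunE; apply: sVU; apply: rw.
Qed.
End Comb.

Definition pT (T : topologicalType) (x0 : T) : Type := T.
HB.instance Definition _ (T : topologicalType) (x0 : T) := Topological.copy (@pT T x0) T.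
HB.instance Definition _ (T : topologicalType) (x0 : T) := isPointed.Build (@pT T x0) x0.
Lemma cover_compact_np (T : topologicalType) : compact [set: T] -> cover_compact [set: T].
Proof.
move=> hc I D f fo sc.
case: (pselect (exists x : T, True)) => [[x0 _]|nx].
  have : cover_compact [set: @pT T x0] by rewrite -compact_cover; exact: hc.
  by move/(_ I D f fo sc).
by exists fset0 => // x; case: nx; exists x.
Qed.

Section Met.
Variables (R : realType) (M : pseudoMetricType R).
Hypothesis hM : compact [set: M].

Lemma ball_cover (r : R) : 0 < r -> exists k (V : 'I_k -> set M),
  fin_open_cover V /\ forall l, exists c, V l `<=` ball c r.
Proof.
move=> r0; have := cover_compact_np hM => /(_ M setT (fun x => (ball x r)°)).
case.
- by move=> i _; exact: open_interior.
- move=> x _; exists x => //; apply: nbhs_singleton; apply: nbhs_interior.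
  exact: nbhsx_ballx.
move=> D _ cD; pose s := in_tuple (enum_fset D).
exists (size (enum_fset D)), (fun l => (ball (tnth s l) r)°); split; first split.
- by move=> i; exact: open_interior.
- move=> x; have [c /= cD' bx] := cD x I.
  have /tnthP[l el] : c \in s by [].
  by exists l; rewrite -el.
- by move=> l; exists (tnth s l); exact: interior_subset.
Qed.

Lemma bigminr_le_seq (I : eqType) (s : seq I) (F : I -> R) x0 j :
  j \in s -> \big[Order.min/x0]_(i <- s) F i <= F j.
Proof.
elim: s => // a s IH; rewrite inE big_cons => /orP[/eqP <-|js].
  by rewrite ge_min lexx.
by rewrite ge_min IH // orbT.
Qed.

Lemma lebesgue k (U : 'I_k -> set M) : fin_open_cover U ->
  exists d : R, 0 < d /\ forall y, exists i, ball y d `<=` U i.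
Proof.
case=> oU cU.
have : forall x, exists p : 'I_k * R, 0 < p.2 /\ ball x p.2 `<=` U p.1.
  move=> x; have [i Uix] := cU x.
  have : nbhs x (U i) by apply: open_nbhs_nbhs; split.
  move=> /nbhs_ballP[r /= r0 brU]; by exists (i, r).
case/choice => rr hrr.
have := cover_compact_np hM => /(_ M setT (fun x => (ball x ((rr x).2 / 2))°)).
case.
- by move=> i _; exact: open_interior.
- move=> x _; exists x => //; apply: nbhs_singleton; apply: nbhs_interior.
  by apply: nbhsx_ballx; rewrite divr_gt0 //; case: (hrr x).
move=> D _ cD.
pose d := \big[Order.min/1]_(c <- enum_fset D) ((rr c).2 / 2).
exists d; split.
  rewrite /d; elim: (enum_fset D) => [|a s IH]; rewrite ?big_nil ?big_cons //.
  by rewrite lt_min IH divr_gt0 //; case: (hrr a).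
move=> y; have [c /= cD' byc] := cD y I.
exists (rr c).1; move=> z yz; apply: (proj2 (hrr c)).
have hyc := interior_subset byc.
have := ball_triangle hyc yz.
apply: le_ball.
have : d <= (rr c).2 / 2 by apply: bigminr_le_seq.
move=> h; rewrite [X in _ <= X](splitr (rr c).2); lra.
Qed.
End Met.

Section Growth.
Variable R : realType.

Lemma growth_pow (a : nat -> R) : inL a -> exists (B : R) (p : nat),
  1 <= B /\ forall n, (0 < n)%N -> a n <= B * n%:R ^+ p.
Proof.
case=> [[a0 amono] [m [m2 [c1 [c2 [c10 [c12 hc]]]]]]].
pose K := Num.max c2 1.
have K1 : 1 <= K by rewrite le_max lexx orbT.
have c2K : c2 <= K by rewrite le_max lexx.
have P : forall j n, (0 < n)%N -> (n <= m ^ j)%N -> a n <= K ^+ j * a 1%N.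
  elim=> [|j IH] n n0.
    rewrite expn0 => n1; have -> : n = 1%N by apply/eqP; rewrite eqn_leq n1 n0.
    by rewrite expr0 mul1r.
  case: n n0 => // n' _ nle.
  pose q := (n' %/ m)%N.
  have hq : (n' = q * m + n' %% m)%N := divn_eq _ _.
  have hr : (n' %% m < m)%N by rewrite ltn_pmod // (leq_trans _ m2).
  have h1 : (n'.+1 <= m * q.+1)%N by nia.
  have h2 : (q.+1 <= m ^ j)%N.
    move: nle; rewrite expnS; set t := (m ^ j)%N; nia.
  apply: le_trans (amono _ _ h1) _.
  apply: le_trans (proj2 (hc q.+1)) _.
  rewrite exprS -mulrA; apply: ler_pM => //.
    by apply: le_trans (ltW c10) c12.
  exact: IH.
pose p := (Num.trunc K).+1.
have Kp : K <= (2 ^ p)%N%:R.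
  apply: le_trans (ltW (truncnS_gt K)) _; rewrite ler_nat; apply: ltnW.
  exact: ltn_expl.
exists ((2 ^ p)%N%:R * (a 1%N + 1)), p; split.
  rewrite -[X in X <= _]mulr1; apply: ler_pM => //.
    by rewrite ler1n expn_gt0.
  by rewrite -[X in X <= _]add0r lerD2r.
move=> n n0; set t := trunc_log m n.
have hn : (n <= m ^ t.+1)%N by apply: ltnW (trunc_log_ltn n m2).
apply: le_trans (P _ _ n0 hn) _.
have ht : (2 ^ t <= n)%N.
  have e2 : forall u, (2 ^ u <= m ^ u)%N by elim=> // u IH; rewrite !expnS leq_mul.
  exact: leq_trans (e2 t) (trunc_logP m2 n0).
have hK : K ^+ t.+1 <= ((2 ^ p) * n ^ p)%N%:R.
  have h3 : K ^+ t.+1 <= ((2 ^ p) ^ t.+1)%N%:R.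
    rewrite natrX; apply: lerXn2r => //; rewrite ?nnegrE //; lra.
  apply: le_trans h3 _.
  rewrite ler_nat -expnM mulnC expnM expnS expnMn leq_mul2l; apply/orP; right.
  by rewrite leq_exp2r.
rewrite mulrAC; apply: ler_pM => //.
- by apply: exprn_ge0; lra.
- by apply: le_trans hK _; rewrite natrM !natrX.
- have := a0 1%N; lra.
Qed.

Lemma ln_seq_le (N : nat -> nat) (B : R) p n : 1 <= B -> (0 < n)%N ->
  (N n)%:R <= B * n%:R ^+ p ->
  ln ((N n)%:R : R) <= (ln B + 2 * p%:R) * Num.sqrt n%:R.
Proof.
move=> B1 n0 hN.
have s1 : 1 <= Num.sqrt (n%:R : R).
  by rewrite -[X in X <= _]sqrtr1 ler_sqrt // ler1n.
have lB : 0 <= ln B by apply: ln_ge0.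
have lnn : ln (n%:R : R) <= 2 * Num.sqrt n%:R.
  move: s1; set s := Num.sqrt (n%:R : R) => s1.
  have -> : (n%:R : R) = s ^+ 2 by rewrite /s sqr_sqrtr.
  rewrite lnXn; last lra.
  have /ln_sublinear h : 0 < s by lra.
  rewrite mulr2n; lra.
case: (posnP (N n)) => [->|Nn0].
  rewrite ln0 //; apply: mulr_ge0; last lra.
  by apply: addr_ge0 => //; rewrite mulr_ge0.
have hpos : 0 < (n%:R : R) ^+ p by rewrite exprn_gt0 // ltr0n.
apply: le_trans (_ : ln (B * n%:R ^+ p) <= _).
  by rewrite ler_ln // posrE ?ltr0n // mulr_gt0 //; lra.
rewrite lnM ?posrE //; last lra.
rewrite lnXn ?ltr0n //.
have -> : ln (n%:R : R) *+ p = p%:R * ln (n%:R : R) by rewrite mulr_natl.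
have : ln B <= ln B * Num.sqrt n%:R.
  by rewrite -[X in X <= _]mulr1 ler_wpM2l.
have : 0 <= p%:R :> R by [].
move=> hp h1.
have h2 : p%:R * ln (n%:R : R) <= p%:R * (2 * Num.sqrt n%:R) by rewrite ler_wpM2l.
nra.
Qed.

Lemma limsup_zero (N : nat -> nat) : inL (fun n => (N n)%:R : R) ->
  limn_esup (fun n => ((ln ((N n)%:R : R)) / n%:R)%:E) = 0%E.
Proof.
move=> hL; have [B [p [B1 hB]]] := growth_pow hL.
set C := ln B + 2 * p%:R.
have C0 : 0 <= C by rewrite addr_ge0 ?ln_ge0 // mulr_ge0.
pose u n := ln ((N n)%:R : R) / n%:R.
have u0 : forall n, 0 <= u n.
  move=> n; apply: divr_ge0 => //; case: (posnP (N n)) => [->|Nn0].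
    by rewrite ln0.
  by apply: ln_ge0; rewrite ler1n.
have cu : u @ \oo --> (0 : R).
  apply/cvgrPdist_le => e e0.
  exists (Num.trunc ((C / e) ^+ 2)).+1 => // n /= hn.
  have n0 : (0 < n)%N by apply: leq_trans hn.
  rewrite sub0r normrN ger0_norm //.
  rewrite /u ler_pdivrMr ?ltr0n //.
  apply: le_trans (ln_seq_le B1 n0 (hB n n0)) _.
  have hs : Num.sqrt (n%:R : R) * Num.sqrt n%:R = n%:R by rewrite -expr2 sqr_sqrtr.
  have s0 : 0 <= Num.sqrt (n%:R : R) by [].
  have hCe : C / e <= Num.sqrt n%:R.
    rewrite -(@ger0_norm _ (C / e)); last by rewrite divr_ge0 // ltW.
    rewrite -sqrtr_sqr ler_sqrt //.
    apply: ltW; apply: lt_le_trans (truncnS_gt _) _; rewrite ler_nat //.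
  rewrite -[X in _ <= _ * X]hs mulrA; apply: ler_wpM2r => //.
  by move: hCe; rewrite ler_pdivrMr // mulrC.
have ce : (fun n => (u n)%:E) @ \oo --> 0%E.
  by apply: cvg_EFin => //; near=> n.
rewrite is_cvg_limn_esupE; last by apply/cvg_ex; exists 0%E.
exact: (cvg_lim (@ereal_hausdorff R)).
Unshelve. all: end_near.
Qed.
End Growth.

Theorem mainTheorem5 (R : realType) (M : metricType R) (f : M -> M)
  (hM : compact [set: M]) (hf : continuous f)
  (hL : forall (k : nat) (U : 'I_k -> set M), fin_open_cover U ->
          inL (@aseq M R f k U)) :
  @o_in_Lbar M R f /\ @htop M R f = 0%E.
Proof.
split.
- have hb : forall j : nat, exists p : {k : nat & 'I_k -> set M},
      fin_open_cover (projT2 p) /\ forall l, exists c, projT2 p l `<=` ball c (j.+1%:R^-1).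
    move=> j; have r0 : 0 < j.+1%:R^-1 :> R by rewrite invr_gt0 ltr0n.
    have [k [V [hV hb]]] := @ball_cover R M hM (j.+1%:R^-1) r0.
    by exists (existT _ k V).
  have [VV hVV] := choice hb.
  exists (fun j => @aseq M R f _ (projT2 (VV j))); split.
    by move=> j; apply: hL; case: (hVV j).
  move=> c; split; case=> ic hc; split => // a.
    case=> j ->; apply: hc; exists (projT1 (VV j)), (projT2 (VV j)); split => //.
    by case: (hVV j).
  case=> k [U [hU ->]].
  have [d [d0 hd]] := @lebesgue R M hM k U hU.
  pose j := Num.trunc d^-1.
  have hj : j.+1%:R^-1 <= d.
    have h : 1 < j.+1%:R * d by rewrite -ltr_pdivrMr // div1r; exact: truncnS_gt.
    rewrite -div1r ler_pdivrMr ?ltr0n // mulrC; exact: ltW.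
  have [hV1 hV2] := hVV j.
  have : forall l, exists i, projT2 (VV j) l `<=` U i.
    move=> l; have [c0 hc0] := hV2 l; have [i hi] := hd c0.
    exists i => x /hc0 hx; apply: hi; exact: le_ball hj _ hx.
  case/choice => g hg.
  have [C [C0 hC]] := hc _ (ex_intro _ j erefl).
  exists C; split => // n; apply: le_trans (hC n); rewrite /aseq ler_nat.
  exact: (acount_refine f n (proj2 hV1) hg).
- apply: (@eq_trans _ _ (ereal_sup [set 0%E])); last exact: ereal_sup1.
  congr ereal_sup; apply/seteqP; split => e.
    by case=> k [U [hU ->]]; exact: (limsup_zero (hL k U hU)).
  move=> /= ->; exists 1%N, (fun _ => setT); split.
    by split => [_|x]; [exact: openT | exists ord0].
  by rewrite (limsup_zero (hL 1%N (fun _ => setT) _)) //; split => [_|x]; [exact: openT | exists ord0].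
Qed.
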